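(* Let $r\ge2$ and let $n_{kj}$ ($1\le j<k\le r$) be nonnegative integers, with $p_k=\sum_{j<k}n_{kj}$ and $q_j=\sum_{k>j}n_{kj}$. The following are equivalent: (i) there exists $m\in\{0,1\}$ such that $\frac{\pi}{4}\sum_{1\le j<k\le r}\varepsilon_j\delta_kn_{kj}\equiv m\pi\pmod{2\pi}$ for all $\boldsymbol{\varepsilon},\boldsymbol{\delta}\in\{1,-1\}^r$; (ii) every $n_{kj}$ is even, and every $p_k$ and every $q_j$ is divisible by $4$.
   Context: Here $\boldsymbol{\varepsilon}=(\varepsilon_1,\dots,\varepsilon_r)$ and $\boldsymbol{\delta}=(\delta_1,\dots,\delta_r)$ range over $\{1,-1\}^r$. (In the paper, $n_{kj}=\dim V_{kj}$ are the structure constants of a homogeneous cone, but the statement is purely arithmetic.) *)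

(* Defs.v *)
From HB Require Import structures.
From mathcomp Require Import all_boot all_order all_algebra.
From mathcomp Require Import reals trigo.
Set Implicit Arguments. Unset Strict Implicit. Unset Printing Implicit Defensive.
Import Order.TTheory GRing.Theory Num.Theory.
Local Open Scope ring_scope.

(* Indices 1..r are represented by 'I_r (0-based). n k j is only used for j < k. *)

Definition pk (r : nat) (n : 'I_r -> 'I_r -> nat) (k : 'I_r) : nat :=
  (\sum_(j < r | (j < k)%N) n k j)%N.

Definition qj (r : nat) (n : 'I_r -> 'I_r -> nat) (j : 'I_r) : nat :=
  (\sum_(k < r | (j < k)%N) n k j)%N.

Definition signvec (r : nat) (e : 'I_r -> int) : Prop :=
  forall i, e i = 1 \/ e i = -1.

Definition epsdelta_sum (r : nat) (n : 'I_r -> 'I_r -> nat)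
    (eps delta : 'I_r -> int) : int :=
  \sum_(k < r) \sum_(j < r | (j < k)%N) eps j * delta k * (n k j)%:Z.

(* Main.v *)
Require Import Defs.
From HB Require Import structures.
From mathcomp Require Import all_boot all_order all_algebra.
From mathcomp Require Import reals trigo.
From mathcomp Require Import ring lra zify.
Import Order.TTheory GRing.Theory Num.Theory.
Local Open Scope ring_scope.

Section Aux.
Variables (r : nat) (n : 'I_r -> 'I_r -> nat).

Definition NN : int := \sum_(k < r) (pk n k)%:Z.

Lemma pkZ k : (pk n k)%:Z = \sum_(j < r | (j < k)%N) (n k j)%:Z.
Proof. by rewrite /pk -natz natr_sum; apply: eq_bigr => j _; rewrite natz. Qed.

Lemma qjZ j : (qj n j)%:Z = \sum_(k < r | (j < k)%N) (n k j)%:Z.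
Proof. by rewrite /qj -natz natr_sum; apply: eq_bigr => k _; rewrite natz. Qed.

Lemma key (eps delta : 'I_r -> int) :
  epsdelta_sum n eps delta =
  NN - \sum_(j < r) (1 - eps j) * (qj n j)%:Z
     - \sum_(k < r) (1 - delta k) * (pk n k)%:Z
     + \sum_(k < r) \sum_(j < r | (j < k)%N) (1 - eps j) * (1 - delta k) * (n k j)%:Z.
Proof.
have E : forall k : 'I_r, \sum_(j < r | (j < k)%N) eps j * delta k * (n k j)%:Z =
   (pk n k)%:Z - \sum_(j < r | (j < k)%N) (1 - eps j) * (n k j)%:Z
   - (1 - delta k) * (pk n k)%:Z
   + \sum_(j < r | (j < k)%N) (1 - eps j) * (1 - delta k) * (n k j)%:Z.
  move=> k; rewrite pkZ mulr_sumr -!sumrB -big_split /=.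
  by apply: eq_bigr => j _; ring.
rewrite /epsdelta_sum (eq_bigr _ (fun k _ => E k)) big_split !sumrB /=.
congr (_ - _ - _ + _).
rewrite [RHS](eq_bigr (fun j : 'I_r => \sum_(k < r | (j < k)%N) (1 - eps j) * (n k j)%:Z));
  last by move=> j _; rewrite qjZ mulr_sumr.
rewrite [LHS](eq_bigr (fun k : 'I_r => \sum_(j < r) if (j < k)%N then (1 - eps j) * (n k j)%:Z else 0));
  last by move=> k _; rewrite big_mkcond.
rewrite exchange_big /=; apply: eq_bigr => j _. by rewrite [RHS]big_mkcond.
Qed.

Definition one1 : 'I_r -> int := fun _ => 1.
Definition sg1 (j : 'I_r) : 'I_r -> int := fun i => if i == j then -1 else 1.

Lemma signvec_one : signvec one1. Proof. by move=> i; left. Qed.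
Lemma signvec_sg1 j : signvec (sg1 j).
Proof. by move=> i; rewrite /sg1; case: (i == j); [right|left]. Qed.

Lemma sum_sg1 j (F : 'I_r -> int) :
  \sum_(i < r) (1 - sg1 j i) * F i = 2 * F j.
Proof.
rewrite (bigD1 j) //= big1 ?addr0; first by rewrite /sg1 eqxx.
by move=> i /negbTE H; rewrite /sg1 H subrr mul0r.
Qed.

Lemma sum_one (F : 'I_r -> int) : \sum_(i < r) (1 - one1 i) * F i = 0.
Proof. by rewrite big1 // => i _; rewrite /one1 subrr mul0r. Qed.

Lemma key_one : epsdelta_sum n one1 one1 = NN.
Proof.
rewrite key !sum_one big1 ?subr0 ?addr0 // => k _.
by rewrite big1 // => j _; rewrite /one1 subrr !mul0r.
Qed.

Lemma key_eps j : epsdelta_sum n (sg1 j) one1 = NN - 2 * (qj n j)%:Z.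
Proof.
rewrite key sum_sg1 sum_one big1 ?subr0 ?addr0 // => k _.
by rewrite big1 // => i _; rewrite /one1 subrr !mulr0 mul0r.
Qed.

Lemma key_delta k : epsdelta_sum n one1 (sg1 k) = NN - 2 * (pk n k)%:Z.
Proof.
rewrite key sum_sg1 sum_one big1 ?subr0 ?addr0 // => k' _.
by rewrite big1 // => i _; rewrite /one1 subrr !mul0r.
Qed.

Lemma key_both (j k : 'I_r) : (j < k)%N -> epsdelta_sum n (sg1 j) (sg1 k) =
   NN - 2 * (qj n j)%:Z - 2 * (pk n k)%:Z + 4 * (n k j)%:Z.
Proof.
move=> jk; rewrite key !sum_sg1; congr (_ + _).
rewrite (bigD1 k) //= [X in _ + X]big1 ?addr0; last first.
  move=> k' /negbTE H; rewrite big1 // => i _.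
  by rewrite /sg1 H subrr mulr0 mul0r.
rewrite (bigD1 j) //= [X in _ + X]big1 ?addr0; last first.
  by move=> i /andP[_ /negbTE H]; rewrite /sg1 H subrr !mul0r.
rewrite /sg1 !eqxx; ring.
Qed.

End Aux.
Lemma eqpi (R : realType) (m : nat) (S t : int) :
  (pi / 4 * S%:~R = (m%:R * pi + t%:~R * (2 * pi) :> R)) <-> S = 4 * m%:Z + 8 * t.
Proof.
have pi0 : (pi : R) != 0 by rewrite gt_eqF // pi_gt0.
have E : pi / 4 * S%:~R - (m%:R * pi + t%:~R * (2 * pi)) = pi / 4 * (S - (4 * m%:Z + 8 * t))%:~R :> R.
  by field.
split=> H.
  move: E; rewrite H subrr => /esym /eqP; rewrite mulf_eq0 intr_eq0 subr_eq0 mulf_eq0 (negbTE pi0) invr_eq0 pnatr_eq0 /=.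
  by move/eqP.
move: E; rewrite H subrr mulr0 => /eqP; by rewrite subr_eq0 => /eqP.
Qed.

Lemma sum8 (I : finType) (P : pred I) (F : I -> int) :
  (forall i, P i -> exists u, F i = 8 * u) -> exists u, \sum_(i | P i) F i = 8 * u.
Proof.
move=> H; apply: (big_ind (fun x => exists u, x = 8 * u)).
- by exists 0.
- by move=> x y [a ->] [b ->]; exists (a + b); ring.
- exact: H.
Qed.

Theorem mainTheorem8 (R : realType) (r : nat) (hr : (2 <= r)%N)
    (n : 'I_r -> 'I_r -> nat) :
  (exists m : nat, (m <= 1)%N /\
     forall eps delta : 'I_r -> int, signvec eps -> signvec delta ->
       exists t : int,
         pi / 4 * (epsdelta_sum n eps delta)%:~R
           = (m%:R * pi + t%:~R * (2 * pi) :> R))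
  <->
  ((forall j k : 'I_r, (j < k)%N -> ~~ odd (n k j)) /\
   (forall k : 'I_r, (4 %| pk n k)%N) /\
   (forall j : 'I_r, (4 %| qj n j)%N)).
Proof.
split.
  case=> m [hm H].
  have HS : forall eps delta, signvec eps -> signvec delta ->
      exists t : int, epsdelta_sum n eps delta = 4 * m%:Z + 8 * t.
    by move=> e d he hd; have [t /eqpi Ht] := H e d he hd; exists t.
  have [t0 H0] := HS _ _ (signvec_one r) (signvec_one r).
  rewrite key_one in H0.
  have Hq : forall j, exists a : int, (qj n j)%:Z = 4 * a.
    move=> j; have [t1 H1] := HS _ _ (@signvec_sg1 r j) (signvec_one r).
    rewrite key_eps in H1; exists (t0 - t1); lia.
  have Hp : forall k, exists a : int, (pk n k)%:Z = 4 * a.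
    move=> k; have [t1 H1] := HS _ _ (signvec_one r) (@signvec_sg1 r k).
    rewrite key_delta in H1; exists (t0 - t1); lia.
  split; [|split].
  - move=> j k jk; have [t1 H1] := HS _ _ (@signvec_sg1 r j) (@signvec_sg1 r k).
    rewrite key_both // in H1.
    have [a Ha] := Hq j; have [b Hb] := Hp k.
    rewrite -dvdn2; lia.
  - by move=> k; have [a Ha] := Hp k; lia.
  - by move=> j; have [a Ha] := Hq j; lia.
case=> [hn [hp hq]].
have hsum : (4 %| \sum_(k < r) pk n k)%N by apply: dvdn_sum => k _; exact: hp.
have hNN : NN r n = (\sum_(k < r) pk n k)%N%:Z.
  by rewrite /NN -natz natr_sum; apply: eq_bigr => k _; rewrite natz.
case/dvdnP: hsum => M hM.
exists (odd M); split; first by case: (odd M).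
move=> e d he hd.
have [u1 Hu1] : exists u, \sum_(j < r) (1 - e j) * (qj n j)%:Z = 8 * u.
  apply: sum8 => j _; case/dvdnP: (hq j) => a ha.
  by case: (he j) => ->; [exists 0 | exists a%:Z]; lia.
have [u2 Hu2] : exists u, \sum_(k < r) (1 - d k) * (pk n k)%:Z = 8 * u.
  apply: sum8 => k _; case/dvdnP: (hp k) => a ha.
  by case: (hd k) => ->; [exists 0 | exists a%:Z]; lia.
have [u3 Hu3] : exists u, \sum_(k < r) \sum_(j < r | (j < k)%N)
     (1 - e j) * (1 - d k) * (n k j)%:Z = 8 * u.
  apply: sum8 => k _; apply: sum8 => j jk.
  have := hn j k jk; rewrite -dvdn2 => /dvdnP [c hc].
  by case: (he j) => ->; case: (hd k) => ->;
    [exists 0 | exists 0 | exists 0 | exists c%:Z]; lia.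
have hMo : M = (odd M + 2 * M./2)%N.
  by rewrite -[LHS]odd_double_half -mul2n.
exists (M./2%:Z - u1 - u2 + u3); apply/eqpi.
rewrite key Hu1 Hu2 Hu3 hNN hM.
move: hMo; move: (odd M) (M./2) => b h hMo.
rewrite hMo; lia.
Qed.
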